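(* Let $f: \mathbb{R}^n \to \mathbb{R}^n$ be a convex topical function. Then $\mathcal{G}(f)$ is identical to the syntactic graph $\mathcal{G}_s(f)$.
   Context: $f$ is topical if $f(x+h) = f(x)+h$ for all $h\in\mathbb{R}$ (scalar added to each coordinate) and $x\le y$ componentwise implies $f(x)\le f(y)$. $f$ is convex if each component $f_i$ is convex. $\mathcal{G}(f)$ is the directed graph on $\{1,\dots,n\}$ with an edge $i\to j$ iff $\lim_{u\to\infty} f_i(u e_{\{j\}}) = \infty$, $e_{\{j\}}$ being the $j$-th standard basis vector. $\mathcal{G}_s(f)$ is the directed graph on $\{1,\dots,n\}$ with an edge $i\to j$ iff $f_i$ depends on $x_j$, i.e. there is no $h: \mathbb{R}^{n-1}\to\mathbb{R}$ with $f_i(x) = h(x_1,\dots,x_{j-1},x_{j+1},\dots,x_n)$ for all $x$. *)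

(* Defs.v *)
From mathcomp Require Import all_boot all_order all_algebra.
From mathcomp Require Import all_classical all_reals all_analysis.
Set Implicit Arguments. Unset Strict Implicit. Unset Printing Implicit Defensive.
Import Order.TTheory GRing.Theory Num.Theory.
Import numFieldNormedType.Exports.
Local Open Scope classical_set_scope.
Local Open Scope ring_scope.

Definition vec (R : realType) (n : nat) := 'I_n -> R.

Definition topical (R : realType) (n : nat) (f : vec R n -> vec R n) : Prop :=
  (forall (x : vec R n) (h : R) (i : 'I_n), f (fun k => x k + h) i = f x i + h) /\
  (forall (x y : vec R n), (forall k, x k <= y k) -> forall i, f x i <= f y i).

Definition convex_map (R : realType) (n : nat) (f : vec R n -> vec R n) : Prop :=
  forall (i : 'I_n) (x y : vec R n) (t : R), 0 <= t <= 1 ->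
    f (fun k => t * x k + (1 - t) * y k) i <= t * f x i + (1 - t) * f y i.

Definition scaled_basis (R : realType) (n : nat) (j : 'I_n) (u : R) : vec R n :=
  fun k => if k == j then u else 0.

Definition G_edge (R : realType) (n : nat) (f : vec R n -> vec R n) (i j : 'I_n) : Prop :=
  (fun u : R => f (scaled_basis j u) i) @ +oo --> +oo.

(* edge i -> j of G_s(f): f_i depends on x_j, i.e. there is no function h
   of the remaining coordinates (x_k)_{k <> j} with f_i(x) = h((x_k)_{k<>j}). *)
Definition Gs_edge (R : realType) (n : nat) (f : vec R n -> vec R n) (i j : 'I_n) : Prop :=
  ~ exists h : ({k : 'I_n | k != j} -> R) -> R,
      forall x : vec R n, f x i = h (fun k => x (proj1_sig k)).

(* Main.v *)
Require Import Defs.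
From mathcomp Require Import all_boot all_order all_algebra.
From mathcomp Require Import all_classical all_reals all_analysis.
From mathcomp Require Import ring lra.
Import Order.TTheory GRing.Theory Num.Theory.
Local Open Scope ring_scope.

Lemma conv_const (R : realType) (h : R -> R) (B : R) :
  (forall a b t, 0 <= t <= 1 -> h (t * a + (1 - t) * b) <= t * h a + (1 - t) * h b) ->
  (forall a b, a <= b -> h a <= h b) -> (forall u, h u <= B) ->
  forall a b, h a = h b.
Proof.
move=> hc hm hB.
have key : forall a b, a <= b -> h b <= h a.
  move=> a b ab; rewrite leNgt; apply/negP => hlt.
  have hbB := hB b.
  pose d := h b - h a; pose K := B - h a.
  have d0 : 0 < d by rewrite /d subr_gt0.
  have dK : d <= K by rewrite /d /K; lra.
  have K0 : 0 < K by lra.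
  pose s := d / (2 * K).
  have s0 : 0 < s by rewrite /s divr_gt0 //; lra.
  have s1 : s <= 1 by rewrite /s ler_pdivrMr; lra.
  have sK : s * K = d / 2 by rewrite /s; field; lra.
  pose y := a + (b - a) / s.
  have eb : s * y + (1 - s) * a = b by rewrite /y; field; lra.
  have st : 0 <= s <= 1 by apply/andP; split; lra.
  have hb := hc y a s st; rewrite eb in hb.
  have hyB : s * h y <= s * B by rewrite ler_pM2l.
  have : d <= s * K by rewrite /d /K; nra.
  rewrite sK; lra.
move=> a b; case: (lerP a b) => ab.
  by apply/le_anti; rewrite hm // key.
by apply/le_anti; rewrite key ?hm // ltW.
Qed.

Theorem proposition3p3 (R : realType) (n : nat) (f : vec R n -> vec R n) :
  topical f -> convex_map f ->
  forall i j : 'I_n, G_edge f i j <-> Gs_edge f i j.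
Proof.
move=> [Hhom Hmon] Hcvx i j; split.
- move=> HG [h Hh].
  have Hc : forall u, f (scaled_basis j u) i = f (scaled_basis j 0) i.
    move=> u; rewrite !Hh; congr h; apply: funext => -[k kj] /=.
    by rewrite /scaled_basis (negbTE kj).
  move/cvgryPge: HG => /(_ (f (scaled_basis j 0) i + 1)) [M [_ HM]].
  have := HM (M + 1); rewrite (Hc (M + 1)) ltrDl ltr01 => /(_ isT) H; lra.
- move=> HGs; apply: contrapT => nG; apply: HGs.
  pose g := fun u => f (scaled_basis j u) i.
  have gmono : forall u v, u <= v -> g u <= g v.
    by move=> u v uv; apply: Hmon => k; rewrite /scaled_basis; case: ifP.
  have [M HM] : exists M, forall u, g u <= M.
    apply: contrapT => nb; apply: nG; apply/cvgryPge => A.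
    have [u Hu] : exists u, A < g u.
      apply: contrapT => nu; apply: nb; exists A => u; rewrite leNgt.
      by apply/negP => H; apply: nu; exists u.
    exists u; split; first exact: num_real.
    by move=> x ux; apply: le_trans (ltW Hu) (gmono _ _ (ltW ux)).
  have Key : forall x u, f (fun k => x k + scaled_basis j u k) i = f x i.
    move=> x u.
    pose hx := fun u => f (fun k => x k + scaled_basis j u k) i.
    have hx0 : hx 0 = f x i.
      rewrite /hx; congr f; apply: funext => k; rewrite /scaled_basis.
      by case: ifP; rewrite addr0.
    pose c := \sum_(k < n) `|x k|.
    have xc : forall k, x k <= c.
      move=> k; rewrite /c (bigD1 k) //=; apply: le_trans (ler_norm _) _.
      by rewrite lerDl sumr_ge0.
    rewrite -hx0; apply: (@conv_const R hx (M + c)).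
    + move=> a b t t01; rewrite /hx.
      have -> : (fun k => x k + scaled_basis j (t * a + (1 - t) * b) k) =
        (fun k => t * (x k + scaled_basis j a k) + (1 - t) * (x k + scaled_basis j b k)).
        by apply: funext => k; rewrite /scaled_basis; case: ifP => _; ring.
      exact: Hcvx.
    + move=> a b ab; apply: Hmon => k; rewrite lerD2l /scaled_basis.
      by case: ifP.
    + move=> v; rewrite /hx.
      apply: (@le_trans _ _ (f (fun k => scaled_basis j v k + c) i)).
        by apply: Hmon => k; rewrite addrC lerD2l.
      rewrite Hhom; have := HM v; rewrite /g => ?; lra.
  exists (fun y => f (fun k => match (insub k : option {k : 'I_n | k != j}) with
                                 Some s => y s | None => 0 end) i).
  move=> x /=.
  pose z := fun k => if k == j then 0 else x k.
  transitivity (f z i).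
    rewrite -(Key z (x j)); congr f; apply: funext => k.
    rewrite /z /scaled_basis; case: eqP => [->|_].
      by rewrite add0r.
    by rewrite addr0.
  congr f; apply: funext => k; rewrite /z; case: insubP => [s kj eqs|].
    by rewrite (negbTE kj) -eqs.
  by rewrite negbK => /eqP ->; rewrite eqxx.
Qed.
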